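(* The relation $\le_{\rm cx}$ is a preorder (reflexive and transitive) on the space $L^0$ of all real-valued random variables on an atomless probability space.
   Context: An expectation $\mathbb E[Z]$ is well-defined if $\mathbb E[\max\{Z,0\}]<\infty$ or $\mathbb E[\max\{-Z,0\}]<\infty$. $X\le_{\rm cx}Y$ means $\mathbb E[u(X)]\le\mathbb E[u(Y)]$ for all convex $u:\mathbb R\to\mathbb R$ such that both expectations are well-defined. *)

(* Defs.v *)
From HB Require Import structures.
From mathcomp Require Import all_boot all_order all_algebra.
From mathcomp Require Import all_classical all_reals all_analysis.
Set Implicit Arguments. Unset Strict Implicit. Unset Printing Implicit Defensive.
Import Order.TTheory GRing.Theory Num.Theory.
Local Open Scope classical_set_scope.
Local Open Scope ring_scope.

Definition convex_fun (R : realType) (u : R -> R) : Prop :=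
  forall (x y t : R), 0 <= t -> t <= 1 ->
    u (t * x + (1 - t) * y) <= t * u x + (1 - t) * u y.

Definition atomless (d : measure_display) (T : measurableType d) (R : realType)
    (P : probability T R) : Prop :=
  forall A : set T, measurable A -> (0 < P A)%E ->
    exists B : set T, [/\ measurable B, B `<=` A, (0 < P B)%E & (P B < P A)%E].

Definition expect (d : measure_display) (T : measurableType d) (R : realType)
    (P : probability T R) (Z : T -> R) : \bar R :=
  (\int[P]_(x in setT) (Z x)%:E)%E.

Definition expect_welldef (d : measure_display) (T : measurableType d) (R : realType)
    (P : probability T R) (Z : T -> R) : Prop :=
  (expect P (fun x => Num.max (Z x) 0%R) < +oo)%E \/
  (expect P (fun x => Num.max (- Z x)%R 0%R) < +oo)%E.

Definition cx_le (d : measure_display) (T : measurableType d) (R : realType)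
    (P : probability T R) (X Y : T -> R) : Prop :=
  forall u : R -> R, convex_fun u ->
    expect_welldef P (u \o X) -> expect_welldef P (u \o Y) ->
    (expect P (u \o X) <= expect P (u \o Y))%E.

(* Main.v *)
Require Import Defs.
From HB Require Import structures.
From mathcomp Require Import all_boot all_order all_algebra.
From mathcomp Require Import all_classical all_reals all_analysis.
Local Open Scope classical_set_scope.
Local Open Scope ring_scope.
Import Order.TTheory GRing.Theory Num.Theory.

Section Aux.
Variables (d : measure_display) (T : measurableType d) (R : realType)
  (P : probability T R).

Definition Ap (f : T -> R) := expect P (fun x => Num.max (f x) 0%R).
Definition Bp (f : T -> R) := expect P (fun x => Num.max (- f x)%R 0%R).

Lemma E_split f : expect P f = (Ap f - Bp f)%E.
Proof.
rewrite /Ap /Bp /expect integralE; congr (_ - _)%E;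
  apply: eq_integral => x _; rewrite ?funeposE ?funenegE /=.
- by rewrite /maxe /Order.max /= lte_fin; case: ifP.
- by rewrite /maxe /Order.max /= lte_fin; case: ifP.
Qed.

Lemma Ap_ge0 f : (0 <= Ap f)%E.
Proof. by apply: integral_ge0 => x _; rewrite lee_fin le_max lexx orbT. Qed.

Lemma Bp_ge0 f : (0 <= Bp f)%E.
Proof. by apply: integral_ge0 => x _; rewrite lee_fin le_max lexx orbT. Qed.

Lemma Ap_pos f : Ap (fun x => Num.max (f x) 0%R) = Ap f.
Proof.
rewrite /Ap /expect; apply: eq_integral => x _.
have h : (0 <= Num.max (f x) 0)%R by rewrite le_max lexx orbT.
by rewrite (max_idPl h).
Qed.

Lemma Bp_pos f : Bp (fun x => Num.max (f x) 0%R) = 0%E.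
Proof.
rewrite /Bp /expect; apply: integral0_eq => x _.
have h : (- Num.max (f x) 0 <= 0)%R by rewrite oppr_le0 le_max lexx orbT.
by rewrite (max_idPr h).
Qed.

End Aux.
Arguments Ap {d T R} P f.
Arguments Bp {d T R} P f.
Arguments E_split {d T R} P f.
Arguments Ap_pos {d T R} P f.
Arguments Bp_pos {d T R} P f.
Arguments Bp_ge0 {d T R} P f.

Lemma convex_max0 {R : realType} (u : R -> R) :
  convex_fun u -> convex_fun (fun y => Num.max (u y) 0).
Proof.
move=> cu x y t t0 t1.
have t1' : (0 <= 1 - t) by rewrite subr_ge0.
rewrite ge_max; apply/andP; split; last first.
  by rewrite addr_ge0 // mulr_ge0 // le_max lexx orbT.
apply: (le_trans (cu x y t t0 t1)).
by rewrite lerD // ler_wpM2l // le_max lexx.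
Qed.

Theorem proposition2 (d : measure_display) (T : measurableType d) (R : realType)
    (P : probability T R) (hP : atomless P) :
  (forall X : T -> R, measurable_fun setT X -> cx_le P X X) /\
  (forall X Y Z : T -> R,
      measurable_fun setT X -> measurable_fun setT Y -> measurable_fun setT Z ->
      cx_le P X Y -> cx_le P Y Z -> cx_le P X Z).
Proof.
split; first by move=> X _ u _ _ _; exact: lexx.
move=> X Y Z _ _ _ hXY hYZ u cu wX wZ.
have [wY|nwY] := pselect (expect_welldef P (u \o Y)).
  exact: (le_trans (hXY u cu wX wY) (hYZ u cu wY wZ)).
have AY : Ap P (u \o Y) = +oo%E.
  apply/eqP; rewrite eq_le leey /= leNgt; apply/negP => h.
  by apply: nwY; left.
set v := fun y => Num.max (u y) 0.
have wv : forall W : T -> R, expect_welldef P (v \o W).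
  move=> W; right; rewrite -/(Bp P (v \o W)).
  by rewrite (Bp_pos P (u \o W)) ltry.
have := hYZ v (@convex_max0 R u cu) (wv Y) (wv Z).
rewrite !E_split (Bp_pos P (u \o Y)) (Bp_pos P (u \o Z)) !sube0.
rewrite (Ap_pos P (u \o Y)) (Ap_pos P (u \o Z)) AY leye_eq => /eqP AZ.
have BZ : (Bp P (u \o Z) < +oo)%E.
  case: wZ => h; last exact: h.
  by move: h; rewrite -/(Ap P (u \o Z)) AZ ltxx.
rewrite AZ.
have fB : Bp P (u \o Z) \is a fin_num by rewrite ge0_fin_numE ?Bp_ge0.
rewrite addye ?leey //.
by move: fB; rewrite -fin_numN fin_numE => /andP[].
Qed.
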